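(* Let $n\ge 1$, let $\chi$ be an irreducible character of $S_n$, let $1\le k\le n$, let $X\in M_n(\mathbb{C})$ and fix $\alpha\in Q_{k,n}$. Then $$d_\chi(X)=\sum_{\beta\in Q_{k,n}} d_\chi\Big(X[\alpha|\beta]\bigoplus_{\alpha|\beta}X(\alpha|\beta)\Big).$$
   Context: $d_\chi(A)=\sum_{\sigma\in S_n}\chi(\sigma)\prod_{i=1}^n a_{i\sigma(i)}$ for $A=(a_{ij})\in M_n(\mathbb{C})$. $Q_{k,n}$ is the set of strictly increasing maps $\{1,\ldots,k\}\to\{1,\ldots,n\}$. For $\alpha\in Q_{k,n}$, $\bar\alpha$ is the unique element of $Q_{n-k,n}$ whose image is the complement of the image of $\alpha$. For $\alpha,\beta\in Q_{k,n}$, $X[\alpha|\beta]$ is the $k\times k$ matrix with $(i,j)$ entry $x_{\alpha(i)\beta(j)}$, and $X(\alpha|\beta)$ is the $(n-k)\times(n-k)$ matrix obtained from $X$ by deleting rows $\alpha(1),\ldots,\alpha(k)$ and columns $\beta(1),\ldots,\beta(k)$. For a $k\times k$ matrix $P=(p_{ij})$ and an $(n-k)\times(n-k)$ matrix $R=(r_{ij})$, $P\bigoplus_{\alpha|\beta}R=(y_{ij})$ is the $n\times n$ matrix with $y_{ij}=0$ if exactly one of $i\in\operatorname{Im}\alpha$, $j\in\operatorname{Im}\beta$ holds; $y_{ij}=p_{\alpha^{-1}(i)\beta^{-1}(j)}$ if $i\in\operatorname{Im}\alpha$ and $j\in\operatorname{Im}\beta$; and $y_{ij}=r_{\bar\alpha^{-1}(i)\bar\beta^{-1}(j)}$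 if $i\notin\operatorname{Im}\alpha$ and $j\notin\operatorname{Im}\beta$. *)

(* Defs.v *)
From HB Require Import structures.
From mathcomp Require Import all_boot all_order all_algebra all_fingroup all_field all_character.
From mathcomp Require Import complex reals.
Set Implicit Arguments. Unset Strict Implicit. Unset Printing Implicit Defensive.
Import Order.TTheory GRing.Theory Num.Theory.
Local Open Scope ring_scope.

(* Q_{k,n}: strictly increasing maps {1..k} -> {1..n} (0-based here). *)
Definition strinc (k n : nat) (a : {ffun 'I_k -> 'I_n}) : bool :=
  [forall i : 'I_k, forall j : 'I_k, (i < j)%N ==> (a i < a j)%N].

Definition compl_seq (k n : nat) (a : {ffun 'I_k -> 'I_n}) : seq 'I_n :=
  [seq j <- enum 'I_n | j \notin codom a].

Definition abar (k n : nat) (a : {ffun 'I_k -> 'I_n}) (i : 'I_(n - k)) : 'I_n :=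
  nth (widen_ord (leq_subr k n) i) (compl_seq a) i.

Definition immanant (C : comRingType) (n : nat) (chi : {perm 'I_n} -> C)
  (A : 'M[C]_n) : C :=
  \sum_(s : {perm 'I_n}) chi s * \prod_(i < n) A i (s i).

Definition submx_ab (C : Type) (k n : nat) (X : 'M[C]_n)
  (a b : {ffun 'I_k -> 'I_n}) : 'M[C]_k :=
  \matrix_(i < k, j < k) X (a i) (b j).

Definition delmx_ab (C : Type) (k n : nat) (X : 'M[C]_n)
  (a b : {ffun 'I_k -> 'I_n}) : 'M[C]_(n - k) :=
  \matrix_(i < n - k, j < n - k) X (abar a i) (abar b j).

Definition dsum_ab (C : nmodType) (k n : nat) (a b : {ffun 'I_k -> 'I_n})
  (P : 'M[C]_k) (R : 'M[C]_(n - k)) : 'M[C]_n :=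
  \matrix_(i < n, j < n)
    match [pick p | a p == i], [pick q | b q == j] with
    | Some p, Some q => P p q
    | None, None =>
        match [pick p | abar a p == i], [pick q | abar b q == j] with
        | Some p, Some q => R p q
        | _, _ => 0
        end
    | _, _ => 0
    end.

(* Main.v *)
Require Import Defs.
From HB Require Import structures.
From mathcomp Require Import all_boot all_order all_algebra all_fingroup all_field all_character.
From mathcomp Require Import complex reals.
Import Order.TTheory GRing.Theory Num.Theory.
Local Open Scope ring_scope.

Definition ltO (n : nat) : rel 'I_n := fun x y => (x < y)%N.

Lemma ltO_trans n : transitive (@ltO n).
Proof. move=> x y z; exact: ltn_trans. Qed.

Lemma ltO_irr n : irreflexive (@ltO n).
Proof. move=> x; exact: ltnn. Qed.

Lemma sorted_enum_ord n : sorted (@ltO n) (enum 'I_n).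
Proof.
have := iota_ltn_sorted 0 n; rewrite -val_enum_ord sorted_map.
by apply: sub_sorted.
Qed.

Lemma strinc_inj k n (a : {ffun 'I_k -> 'I_n}) : strinc a -> injective a.
Proof.
move=> /forallP H i j eij; apply/val_inj => /=.
case: (ltngtP i j) => // lt.
- by have := implyP (forallP (H i) j) lt; rewrite eij ltnn.
- by have := implyP (forallP (H j) i) lt; rewrite eij ltnn.
Qed.

Lemma strinc_sorted k n (b : {ffun 'I_k -> 'I_n}) :
  strinc b -> sorted (@ltO n) (codom b).
Proof.
move=> /forallP H; rewrite codomE sorted_map.
apply: sub_sorted (sorted_enum_ord k) => i j lt.
exact: (implyP (forallP (H i) j) lt).
Qed.

Lemma compl_seqE k n (a : {ffun 'I_k -> 'I_n}) :
  compl_seq a = enum [predC codom a].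
Proof. rewrite /compl_seq enumT /enum_mem; apply: eq_filter => j; by rewrite !inE. Qed.

Lemma size_compl k n (a : {ffun 'I_k -> 'I_n}) : injective a ->
  size (compl_seq a) = (n - k)%N.
Proof.
move=> ia; rewrite compl_seqE -cardE.
have := cardC (mem (codom a)); rewrite card_codom // card_ord.
move=> E; rewrite card_ord in E.
by rewrite -{1}(addKn k #|[predC codom a]|) E.
Qed.

Lemma abar_surj k n (a : {ffun 'I_k -> 'I_n}) i : injective a ->
  i \notin codom a -> exists p, abar a p = i.
Proof.
move=> ia ni.
have im : i \in compl_seq a by rewrite compl_seqE mem_enum.
have lt : (index i (compl_seq a) < n - k)%N by rewrite -(size_compl _ _ _ ia) index_mem.
by exists (Ordinal lt); rewrite /abar /= nth_index.
Qed.

Lemma dsum_entry (C : nmodType) k n (a b : {ffun 'I_k -> 'I_n}) (X : 'M[C]_n) :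
  injective a -> injective b -> forall i j,
  dsum_ab a b (submx_ab X a b) (delmx_ab X a b) i j =
  if (i \in codom a) == (j \in codom b) then X i j else 0.
Proof.
move=> ia ib i j; rewrite /dsum_ab mxE.
have nA : (forall p, (a p == i) = false) -> i \notin codom a.
  by move=> N; apply/negP => /codomP [p eq]; have := N p; rewrite eq eqxx.
have nB : (forall q, (b q == j) = false) -> j \notin codom b.
  by move=> N; apply/negP => /codomP [q eq]; have := N q; rewrite eq eqxx.
case: pickP => [p /eqP <- | Na]; case: pickP => [q /eqP <- | Nb].
- by rewrite !codom_f mxE.
- by rewrite codom_f (negbTE (nB Nb)).
- by rewrite codom_f (negbTE (nA Na)).
- rewrite (negbTE (nA Na)) (negbTE (nB Nb)) /=.
  case: pickP => [p /eqP <- | Np]; last first.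
    by have [p ep] := abar_surj _ _ _ _ ia (nA Na); have := Np p; rewrite ep eqxx.
  case: pickP => [q /eqP <- | Nq]; first by rewrite mxE.
  by have [q eq] := abar_surj _ _ _ _ ib (nB Nb); have := Nq q; rewrite eq eqxx.
Qed.

Lemma prod_entry (C : comRingType) k n (a b : {ffun 'I_k -> 'I_n}) (X : 'M[C]_n)
  (s : {perm 'I_n}) : injective a -> injective b ->
  \prod_(i < n) dsum_ab a b (submx_ab X a b) (delmx_ab X a b) i (s i) =
  if [forall i, (i \in codom a) == (s i \in codom b)]
  then \prod_(i < n) X i (s i) else 0.
Proof.
move=> ia ib; case: ifP => [/forallP H | /negbT /forallPn [i Hi]].
  by apply: eq_bigr => i _; rewrite dsum_entry // H.
by rewrite (bigD1 i) //= dsum_entry // (negbTE Hi) mul0r.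
Qed.

Lemma unique_b k n (x0 : 'I_n) (S : {set 'I_n}) : #|S| = k ->
  exists b0 : {ffun 'I_k -> 'I_n}, forall b,
  (strinc b && [forall j, (j \in codom b) == (j \in S)]) = (b == b0).
Proof.
move=> HS.
set s0 := enum S.
have ss : size s0 = k by rewrite -HS cardE.
have sorted0 : sorted (@ltO n) s0.
  by rewrite /s0 /enum_mem -enumT; apply: sorted_filter (@ltO_trans n) _ _ (sorted_enum_ord n).
pose b0 := [ffun i : 'I_k => nth x0 s0 i].
have sb0 : strinc b0.
  apply/forallP => i; apply/forallP => j; apply/implyP => lt; rewrite !ffunE.
  by apply: (sorted_ltn_nth (@ltO_trans n)) => //; rewrite inE ss.
have cb0 : codom b0 =i S.
  move=> j; apply/codomP/idP => [[i ->] | jS].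
    by rewrite ffunE -(mem_enum (mem S)) mem_nth // ss.
  have jS' : j \in s0 by rewrite mem_enum.
  have lt : (index j s0 < k)%N by rewrite -ss index_mem.
  by exists (Ordinal lt); rewrite ffunE /= nth_index.
exists b0 => b; apply/andP/eqP => [[sb /forallP H] | ->]; last first.
  by split => //; apply/forallP => j; rewrite cb0.
have E : codom b = codom b0.
  apply: (irr_sorted_eq (@ltO_trans n) (@ltO_irr n)); try exact: strinc_sorted.
  by move=> j; rewrite cb0 (eqP (H j)).
apply/ffunP => i.
have := congr1 (fun s => nth x0 s i) E.
by rewrite /= !codomE !(nth_map i) -?enumT ?size_enum_ord ?nth_ord_enum.
Qed.

Local Open Scope complex_scope.

Theorem mainTheorem4 (R : realType) (f : {rmorphism algC -> R[i]})
  (n : nat) (hn : (1 <= n)%N)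
  (c : Iirr [set: {perm 'I_n}]%G)
  (k : nat) (hk1 : (1 <= k)%N) (hkn : (k <= n)%N)
  (X : 'M[R[i]]_n) (a : {ffun 'I_k -> 'I_n}) (ha : strinc a) :
  let chi := fun s : {perm 'I_n} => f ('chi[[set: {perm 'I_n}]%G]_c s) in
  immanant chi X =
  \sum_(b : {ffun 'I_k -> 'I_n} | strinc b)
     immanant chi (dsum_ab a b (submx_ab X a b) (delmx_ab X a b)).
Proof.
move=> chi; rewrite /immanant; symmetry.
have ia := strinc_inj _ _ _ ha.
transitivity (\sum_(b : {ffun 'I_k -> 'I_n} | strinc b) \sum_(s : {perm 'I_n})
   chi s * (if [forall i, (i \in codom a) == (s i \in codom b)]
            then \prod_(i < n) X i (s i) else 0)).
  apply: eq_bigr => b Hb; apply: eq_bigr => s _.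
  by rewrite (prod_entry _ _ _ a b X s ia (strinc_inj _ _ _ Hb)).
rewrite exchange_big; apply: eq_bigr => s _.
rewrite -big_distrr -big_mkcondr. congr (_ * _).
set S := ((s^-1)%g @^-1: [set x in codom a]).
have HS : #|S| = k.
  rewrite card_preimset; last exact: perm_inj.
  by rewrite cardsE card_codom // card_ord.
have [b0 Hb0] := unique_b _ _ (Ordinal hn) _ HS.
rewrite (big_pred1 b0) => [//|b /=]; rewrite -Hb0; congr (_ && _).
apply/forallP/forallP => H j.
  by have := H ((s^-1)%g j); rewrite permKV !inE eq_sym.
by have := H (s j); rewrite !inE permK eq_sym.
Qed.
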